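(* Let $\mathcal P_1$ and $\mathcal P_2$ be two shortest paths between nodes $u_0$ and $u_1$, and let $u_2$ be a node on $\mathcal P_2$ distinct from $u_0,u_1$. Consider the shortest-path triangle $\Delta_{\{u_0,u_1,u_2\}}$ whose sides are $\mathcal P_1$ and the two subpaths of $\mathcal P_2$ from $u_0$ to $u_2$ and from $u_2$ to $u_1$. Then the Hausdorff distance satisfies $$d_H(\mathcal P_1,\mathcal P_2)=\max\Big\{\max_{v_1\in\mathcal P_1}\min_{v_2\in\mathcal P_2}d_{v_1,v_2},\ \max_{v_2\in\mathcal P_2}\min_{v_1\in\mathcal P_1}d_{v_1,v_2}\Big\}\le 6\,\delta_{\Delta_{\{u_0,u_1,u_2\}}}+2.$$
   Context: $G=(V,E)$ is a finite connected undirected graph with $n\ge 4$ nodes and $d_{u,v}$ denotes the shortest-path distance (number of edges). For any four nodes $w_1,w_2,w_3,w_4$, form the three sums $d_{w_1,w_2}+d_{w_3,w_4}$, $d_{w_1,w_3}+d_{w_2,w_4}$, $d_{w_1,w_4}+d_{w_2,w_3}$, order them as $S\le M\le L$, and set $\delta_{w_1,w_2,w_3,w_4}=(L-M)/2$. A shortest-path triangle $\Delta_{\{u_0,u_1,u_2\}}$ consists of three distinct nodes with chosen shortest paths between each pair; $\delta_{\Delta_{\{u_0,u_1,u_2\}}}$ is the maximum of $\delta_{w_1,w_2,w_3,w_4}$ over all quadruples of nodes lying on these three paths. *)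

(* Defs.v *)
From HB Require Import structures.
From mathcomp Require Import all_boot all_order all_algebra.
Set Implicit Arguments. Unset Strict Implicit. Unset Printing Implicit Defensive.
Import Order.TTheory GRing.Theory Num.Theory.

(* A graph is a relation e : rel T on a finite type T (assumed symmetric,
   irreflexive, connected in the theorem). *)

Section Graph.
Variables (T : finType) (e : rel T).

Definition walk (k : nat) (u v : T) : bool :=
  [exists p : k.-tuple T, path e u p && (last u p == v)].

(* shortest-path distance: least k with a k-edge walk from u to v
   (in a connected graph such a k is < #|T|). *)
Definition dist (u v : T) : nat := find (fun k => walk k u v) (iota 0 #|T|).

(* u :: p is a shortest path from u to v (p lists the nodes after u) *)
Definition is_sp (u v : T) (p : seq T) : bool :=
  [&& path e u p, last u p == v & size p == dist u v].

(* four-point quantity delta = (L - M)/2 *)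
Definition delta4 (w1 w2 w3 w4 : T) : rat :=
  let s := sort leq [:: dist w1 w2 + dist w3 w4;
                        dist w1 w3 + dist w2 w4;
                        dist w1 w4 + dist w2 w3] in
  (((nth 0 s 2 - nth 0 s 1)%N)%:R / 2)%R.

Definition delta_nodes (V : seq T) : rat := (
  \big[Num.max/0]_(w1 <- V) \big[Num.max/0]_(w2 <- V)
   \big[Num.max/0]_(w3 <- V) \big[Num.max/0]_(w4 <- V) delta4 w1 w2 w3 w4)%R.

(* delta of the shortest-path triangle with sides
   u0 :: p01 (u0 -> u1), u0 :: p02 (u0 -> u2), u2 :: p21 (u2 -> u1) *)
Definition delta_tri (u0 u2 : T) (p01 p02 p21 : seq T) : rat :=
  delta_nodes ((u0 :: p01) ++ (u0 :: p02) ++ (u2 :: p21)).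

(* min_{w in S} dist v w, for nonempty S (default value is dist v (head v S),
   which is attained in S when S is nonempty) *)
Definition dist_set (v : T) (S : seq T) : nat :=
  \big[minn/dist v (head v S)]_(w <- S) dist v w.

Definition hausdorff (P1 P2 : seq T) : nat :=
  maxn (\max_(v1 <- P1) dist_set v1 P2) (\max_(v2 <- P2) dist_set v2 P1).

End Graph.

(* Main.v *)
Require Import Defs.
From HB Require Import structures.
From mathcomp Require Import all_boot all_order all_algebra.
Import Order.TTheory GRing.Theory Num.Theory.
From mathcomp Require Import lra.

Section Aux.
Variables (T : finType) (e : rel T).

Lemma dist_le k u v : walk e k u v -> dist e u v <= k.
Proof.
move=> hw; rewrite /dist.
have [hk|hk] := ltnP k #|T|.
  rewrite leqNgt; apply/negP=> hf.
  have := before_find 0 hf; rewrite nth_iota // add0n hw //.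
by apply: leq_trans (find_size _ _) _; rewrite size_iota.
Qed.

Lemma walk_of u p v : path e u p -> last u p = v -> walk e (size p) u v.
Proof.
move=> hp hl; apply/existsP; exists (in_tuple p); by rewrite /= hp hl eqxx.
Qed.

Lemma walk_pre u p a : path e u p -> a <= size p ->
  walk e a u (last u (take a p)).
Proof.
move=> hp ha; have := @walk_of u (take a p) (last u (take a p)).
rewrite size_take_min (minn_idPl ha); apply => //.
by move: hp; rewrite -{1}(cat_take_drop a p) cat_path => /andP[].
Qed.

Lemma walk_suf u p a : path e u p -> a <= size p ->
  walk e (size p - a) (last u (take a p)) (last u p).
Proof.
move=> hp ha; rewrite -size_drop; apply: walk_of.
  by move: hp; rewrite -{1}(cat_take_drop a p) cat_path => /andP[].
by rewrite -last_cat cat_take_drop.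
Qed.

Lemma mem_pos (v u : T) (p : seq T) : v \in u :: p -> exists2 a, a <= size p & v = last u (take a p).
Proof.
elim: p u => [|x p IH] u.
  by rewrite inE => /eqP->; exists 0.
rewrite inE => /orP[/eqP->|hv]; first by exists 0.
have [a ha ->] := IH x hv; exists a.+1 => //.
Qed.

Lemma sort3 x y z : x <= z -> y <= z ->
  sort leq [:: x; y; z] = [:: minn x y; maxn x y; z].
Proof.
move=> hx hy; apply: (sorted_eq leq_trans anti_leq (sort_sorted leq_total _)).
  rewrite /= geq_max hx hy andbT /= andbT; apply: leq_trans (geq_minl _ _) (leq_maxl _ _).
rewrite perm_sort; have [h|h] := leqP x y; first by [].
by apply/permP => q /=; rewrite addnCA.
Qed.

Lemma delta4_ge w1 w2 w3 w4 n :
  dist e w1 w4 = n ->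
  dist e w1 w2 + dist e w3 w4 <= n -> dist e w1 w3 + dist e w2 w4 <= n ->
  ((dist e w2 w3)%:R <= 2 * delta4 e w1 w2 w3 w4 :> rat)%R.
Proof.
move=> h14 ha hb; rewrite /delta4.
set x := _ + dist e w3 w4; set y := _ + dist e w2 w4.
have h1: dist e w1 w4 + dist e w2 w3 = n + dist e w2 w3 by rewrite h14.
have hx : x <= dist e w1 w4 + dist e w2 w3 by rewrite h1 (leq_trans ha) ?leq_addr.
have hy : y <= dist e w1 w4 + dist e w2 w3 by rewrite h1 (leq_trans hb) ?leq_addr.
rewrite (sort3 _ _ _ hx hy) /= mulrC divfK // ler_nat h1.
have hm : maxn x y <= n by rewrite geq_max ha hb.
by rewrite leq_subRL ?(leq_trans hm (leq_addr _ _)) // leq_add2r.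
Qed.

Lemma big_max_ge (I : eqType) (V : seq I) (F : I -> rat) x : x \in V ->
  (F x <= \big[Num.max/0]_(w <- V) F w)%R.
Proof.
elim: V => // y V IH; rewrite inE big_cons => /orP[/eqP->|h].
  by rewrite le_max lexx.
by rewrite le_max (IH h) orbT.
Qed.

Lemma dist_set_le v S w : w \in S -> dist_set e v S <= dist e v w.
Proof.
rewrite /dist_set; elim: S (dist e v (head v S)) => // y S IH d.
rewrite inE big_cons => /orP[/eqP->|h]; first exact: geq_minl.
exact: leq_trans (geq_minr _ _) (IH d h).
Qed.

Lemma max_le (I : eqType) (V : seq I) (F : I -> nat) (c : rat) :
  (forall x, x \in V -> (F x)%:R <= c)%R -> (0 <= c)%R ->
  ((\max_(x <- V) F x)%:R <= c)%R.
Proof.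
elim: V => [|y V IH] h hc; first by rewrite big_nil.
rewrite big_cons natr_max ge_max h ?mem_head //= IH // => x hx.
by apply: h; rewrite inE hx orbT.
Qed.

End Aux.
Arguments dist_le {T e k u v}.
Arguments walk_pre {T e u p a}.
Arguments walk_suf {T e u p a}.
Arguments delta4_ge {T e w1 w2 w3 w4 n}.
Arguments big_max_ge {I V} F {x}.

Lemma trR {a b c : rat} : (b <= c -> a <= b -> a <= c)%R.
Proof. by move=> h1 h2; apply: le_trans h2 h1. Qed.

Theorem corollary3 (T : finType) (e : rel T)
  (e_sym : symmetric e) (e_irr : irreflexive e)
  (e_conn : forall u v : T, connect e u v) (hn : 4 <= #|T|)
  (u0 u1 u2 : T) (p1 p2 : seq T)
  (hp1 : is_sp e u0 u1 p1) (hp2 : is_sp e u0 u1 p2)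
  (hu2 : u2 \in p2) (hu20 : u2 != u0) (hu21 : u2 != u1) :
  let i := (index u2 p2).+1 in
  ((hausdorff e (u0 :: p1) (u0 :: p2))%:R <=
     6 * delta_tri e u0 u2 p1 (take i p2) (drop i p2) + 2 :> rat)%R.
Proof.
cbv zeta; set i := (index u2 p2).+1; set d := delta_tri _ _ _ _ _ _.
move: hp1 hp2 => /and3P[pa1 /eqP la1 /eqP sa1] /and3P[pa2 /eqP la2 /eqP sa2].
set L := (u0 :: p1) ++ (u0 :: take i p2) ++ (u2 :: drop i p2).
have memL1 x : x \in u0 :: p1 -> x \in L by rewrite mem_cat => ->.
have memL2 x : x \in u0 :: p2 -> x \in L.
  rewrite -{1}(cat_take_drop i p2) -cat_cons !mem_cat => /orP[->|h].
    by rewrite orbT.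
  by rewrite !inE h !orbT.
have dle w1 w2 w3 w4 : w1 \in L -> w2 \in L -> w3 \in L -> w4 \in L ->
    (delta4 e w1 w2 w3 w4 <= d)%R.
  move=> h1 h2 h3 h4; rewrite /d /delta_tri /delta_nodes -/L.
  refine (trR (big_max_ge (fun w => \big[Num.max/(0:rat)]_(w2 <- L) \big[Num.max/(0:rat)]_(w3 <- L) \big[Num.max/(0:rat)]_(w4 <- L) delta4 e w w2 w3 w4) h1) _).
  refine (trR (big_max_ge (fun w => \big[Num.max/(0:rat)]_(w3 <- L) \big[Num.max/(0:rat)]_(w4 <- L) delta4 e w1 w w3 w4) h2) _).
  refine (trR (big_max_ge (fun w => \big[Num.max/(0:rat)]_(w4 <- L) delta4 e w1 w2 w w4) h3) _).
  exact: (big_max_ge (fun w => delta4 e w1 w2 w3 w) h4).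
have key a : a <= dist e u0 u1 ->
   let v := last u0 (take a p1) in let w := last u0 (take a p2) in
   ((dist e v w)%:R <= 2 * d)%R /\ ((dist e w v)%:R <= 2 * d)%R.
  move=> ha v w.
  have ha1 : a <= size p1 by rewrite sa1.
  have ha2 : a <= size p2 by rewrite sa2.
  have d0v := dist_le (walk_pre pa1 ha1).
  have d0w := dist_le (walk_pre pa2 ha2).
  have dv1 := dist_le (walk_suf pa1 ha1); rewrite la1 sa1 in dv1.
  have dw1 := dist_le (walk_suf pa2 ha2); rewrite la2 sa2 in dw1.
  have hv : v \in L.
    apply: memL1; have := mem_last u0 (take a p1); rewrite -/v inE => /orP[/eqP->|h]; first exact: mem_head.
    by rewrite inE (mem_take h) orbT.
  have hw : w \in L.
    apply: memL2; have := mem_last u0 (take a p2); rewrite -/w inE => /orP[/eqP->|h]; first exact: mem_head.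
    by rewrite inE (mem_take h) orbT.
  have h0 : u0 \in L by rewrite mem_cat mem_head.
  have h1 : u1 \in L by apply: memL1; rewrite -la1 mem_last.
  have e1 : dist e u0 v + dist e w u1 <= dist e u0 u1.
    by rewrite -(subnKC ha) leq_add.
  have e2 : dist e u0 w + dist e v u1 <= dist e u0 u1.
    by rewrite -(subnKC ha) leq_add.
  split.
    apply: le_trans (delta4_ge (erefl _) e1 e2) _.
    by rewrite ler_pM2l // dle.
  apply: le_trans (delta4_ge (erefl _) e2 e1) _.
  by rewrite ler_pM2l // dle.
have hd : (0 <= d)%R.
  have := key 0 (leq0n _); rewrite /= => -[h _].
  have h0 : (0 <= (dist e (last u0 (take 0 p1)) (last u0 (take 0 p2)))%:R :> rat)%R by [].
  lra.
have H : ((hausdorff e (u0 :: p1) (u0 :: p2))%:R <= 2 * d)%R.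
  rewrite /hausdorff natr_max ge_max; apply/andP; split.
    apply: max_le; last by rewrite mulr_ge0.
    move=> v /mem_pos [a ha ->]; rewrite sa1 in ha.
    have [k _] := key a ha.
    apply: (trR k); rewrite ler_nat; apply: dist_set_le.
    by have := mem_last u0 (take a p2); rewrite inE => /orP[/eqP->|/mem_take h];
      rewrite inE ?eqxx ?h ?orbT.
  apply: max_le; last by rewrite mulr_ge0.
  move=> v /mem_pos [a ha ->]; rewrite sa2 in ha.
  have [_ k] := key a ha.
  apply: (trR k); rewrite ler_nat; apply: dist_set_le.
  by have := mem_last u0 (take a p1); rewrite inE => /orP[/eqP->|/mem_take h];
    rewrite inE ?eqxx ?h ?orbT.
lra.
Qed.
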